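(* Let $L\ge2$ and let $[0,1]^2=S_0\supset S_1\supset\cdots$ be such that each $S_n$ is the union of $L^n$ squares of $\mathcal{D}_n$, one from each column; let $\mathcal{S}_n=\{Q\in\mathcal{D}_n:Q\subset S_n\}$. There is a constant $C$ depending only on $L$ such that for all $n$ and all $i,j\in\{1,\dots,n\}$, \[ \#\bigl\{(Q,Q')\in\mathcal{S}_n\times\mathcal{S}_n:\ |x(Q)-x(Q')|\le L^{-i},\ |y(Q)-y(Q')|\ge L^{-j}\bigr\}\le C\,L^{2n+j-2i}. \]
   Context: $\mathcal{D}_n$ is the set of closed squares obtained by dividing $[0,1]^2$ into an $L^n\times L^n$ grid. For $Q\in\mathcal{D}_n$, $(x(Q),y(Q))$ denotes the lower-left corner of $Q$. *)

(* Defs.v *)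
From HB Require Import structures.
From mathcomp Require Import all_boot all_order all_algebra.
From mathcomp Require Import boolp classical_sets reals.
Unset Strict Implicit. Unset Printing Implicit Defensive.
Import Order.TTheory GRing.Theory Num.Theory.
Local Open Scope ring_scope.
Local Open Scope classical_set_scope.

(* The closed dyadic-type square of generation n in column a, row b:
   [a/L^n, (a+1)/L^n] x [b/L^n, (b+1)/L^n]. Its lower-left corner is
   (a/L^n, b/L^n). Elements of D_n are those with a, b < L^n. *)
Definition dsq (R : realType) (L n a b : nat) : set (R * R) :=
  [set p | (a%:R / (L ^ n)%:R <= p.1 <= a.+1%:R / (L ^ n)%:R) /\
           (b%:R / (L ^ n)%:R <= p.2 <= b.+1%:R / (L ^ n)%:R)].

Definition xcor (R : realType) (L n a : nat) : R := a%:R / (L ^ n)%:R.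

Definition unit_square (R : realType) : set (R * R) :=
  [set p | (0 <= p.1 <= 1) /\ (0 <= p.2 <= 1)].

Definition one_per_column (R : realType) (L n : nat) (Sn : set (R * R)) : Prop :=
  exists f : nat -> nat, (forall a, (a < L ^ n)%N -> (f a < L ^ n)%N) /\
    Sn = \bigcup_(a in [set a : nat | (a < L ^ n)%N]) dsq R L n a (f a).

Definition admissible_seq (R : realType) (L : nat) (S : nat -> set (R * R)) : Prop :=
  S 0%N = unit_square R /\ (forall n, S n.+1 `<=` S n) /\
  (forall n, one_per_column R L n (S n)).

(* Index type of D_n : pairs (column, row) with entries < L^n. *)
Definition Didx (L n : nat) := ('I_(L ^ n) * 'I_(L ^ n))%type.

Definition inSn (R : realType) (L n : nat) (S : nat -> set (R * R)) (Q : Didx L n) : Prop :=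
  dsq R L n Q.1 Q.2 `<=` S n.

Definition pair_set (R : realType) (L n i j : nat) (S : nat -> set (R * R)) :
  {set Didx L n * Didx L n} :=
  [set QQ : Didx L n * Didx L n |
     `[< inSn R L n S QQ.1 /\ inSn R L n S QQ.2 /\
         `|xcor R L n QQ.1.1 - xcor R L n QQ.2.1| <= ((L ^ i)%:R)^-1 /\
         `|xcor R L n QQ.1.2 - xcor R L n QQ.2.2| >= ((L ^ j)%:R)^-1 >]].

(* Main.v *)
Require Import Defs.
From HB Require Import structures.
From mathcomp Require Import all_boot all_order all_algebra.
From mathcomp Require Import boolp classical_sets reals.
From mathcomp Require Import lra zify.
Import Order.TTheory GRing.Theory Num.Theory.
Local Open Scope ring_scope.
Local Open Scope classical_set_scope.

Section Aux.
Variable R : realType.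

Lemma frac_le (x d y e : nat) : (0 < d)%N -> (0 < e)%N ->
  (x%:R / d%:R <= y%:R / e%:R :> R) = (x * e <= y * d)%N.
Proof.
move=> hd he.
rewrite ler_pdivrMr ?ltr0n // mulrAC ler_pdivlMr ?ltr0n //.
by rewrite -!natrM ler_nat.
Qed.

Lemma divn_char (B a c : nat) : (0 < B)%N -> (c * B <= a)%N -> (a < c.+1 * B)%N ->
  (a %/ B)%N = c.
Proof.
move=> hB h1 h2; apply/eqP; rewrite eqn_leq.
by rewrite -ltnS ltn_divLR // h2 leq_divRL.
Qed.

Lemma nested (S : nat -> set (R * R)) : (forall n, S n.+1 `<=` S n) ->
  forall m n, (m <= n)%N -> S n `<=` S m.
Proof.
move=> H m n /subnK <-; elim: (n - m)%N => //= k IH.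
exact: subset_trans (H _) IH.
Qed.

Lemma col_struct (L : nat) (S : nat -> set (R * R)) : (0 < L)%N ->
  admissible_seq R L S -> forall m n, (m <= n)%N ->
  exists g : nat -> nat, forall a b : nat, dsq R L n a b `<=` S n ->
    (b %/ L ^ (n - m))%N = g (a %/ L ^ (n - m))%N.
Proof.
move=> hL [_ [Hnest Hcol]] m n hmn.
have [f [_ Hf]] := Hcol m.
exists f => a b Hsub.
set B := (L ^ (n - m))%N.
have hB : (0 < B)%N by rewrite expn_gt0 hL.
have hLm : (0 < L ^ m)%N by rewrite expn_gt0 hL.
have hN : (L ^ n = B * L ^ m)%N by rewrite /B -expnD subnK.
have hN0 : (0 < L ^ n)%N by rewrite expn_gt0 hL.
have h2N : (0 < 2 * L ^ n)%N by rewrite muln_gt0.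
pose p : R * R := ((2 * a).+1%:R / (2 * L ^ n)%:R, (2 * b).+1%:R / (2 * L ^ n)%:R).
have Hp : dsq R L n a b p.
  rewrite /dsq /p /=; rewrite !frac_le //.
  split; apply/andP; split.
  - rewrite mulnA; apply: leq_mul => //; lia.
  - rewrite (mulnC 2) mulnA; apply: leq_mul => //; lia.
  - rewrite mulnA; apply: leq_mul => //; lia.
  - rewrite (mulnC 2) mulnA; apply: leq_mul => //; lia.
have := @nested S Hnest m n hmn p (Hsub p Hp).
move=> {Hp}.
rewrite Hf => -[c /= hc [/andP [h1 h2] /andP [h3 h4]]].
move: h1 h2 h3 h4; rewrite /p /= !frac_le // hN.
have E : forall x y : nat, (x * (2 * (B * L ^ m)) = (x * (2 * B)) * L ^ m)%N.
  by move=> x y; rewrite !mulnA.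
rewrite !(E _ 0%N) !leq_pmul2r // => h1 h2 h3 h4.
have -> : (a %/ B)%N = c.
  apply: divn_char => //; lia.
apply: divn_char => //; lia.
Qed.

End Aux.

Definition enc (B a a' : nat) : bool * nat * nat * nat :=
  if (a < a')%N then (true, a' %/ B, a' %/ B * B - a - 1, a' - a' %/ B * B)%N
  else (false, a %/ B, a %/ B * B - a' - 1, a - a %/ B * B)%N.

Definition dec (B : nat) (t : bool * nat * nat * nat) : nat * nat :=
  let '(b, k, u, v) := t in
  if b then (k * B - u - 1, k * B + v)%N else (k * B + v, k * B - u - 1)%N.

Lemma enc_dec B a a' : (0 < B)%N -> (a %/ B != a' %/ B)%N ->
  dec B (enc B a a') = (a, a').
Proof.
move=> hB hne; rewrite /enc; case: ltnP => h /=.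
  have hlt : (a %/ B < a' %/ B)%N by rewrite ltn_neqAle hne leq_div2r // ltnW.
  rewrite ltn_divLR // in hlt.
  have := leq_trunc_div a' B.
  set k := (a' %/ B * B)%N in hlt *; move=> hk; congr pair; lia.
have hlt : (a' %/ B < a %/ B)%N by rewrite ltn_neqAle eq_sym hne leq_div2r.
rewrite ltn_divLR // in hlt.
have := leq_trunc_div a B.
set k := (a %/ B * B)%N in hlt *; move=> hk; congr pair; lia.
Qed.

Lemma enc_bounds B D M a a' : (0 < B)%N -> (a %/ B != a' %/ B)%N ->
  (a' <= a + D)%N -> (a <= a' + D)%N -> (a < M * B)%N -> (a' < M * B)%N ->
  [/\ ((enc B a a').1.1.2 <= M)%N, ((enc B a a').1.2 <= D)%N &
      ((enc B a a').2 <= D)%N].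
Proof.
move=> hB hne h1 h2 h3 h4; rewrite /enc; case: ltnP => h /=.
  have hlt : (a %/ B < a' %/ B)%N by rewrite ltn_neqAle hne leq_div2r // ltnW.
  rewrite ltn_divLR // in hlt.
  have := leq_trunc_div a' B.
  have hM : (a' %/ B < M)%N by rewrite ltn_divLR.
  set k := (a' %/ B * B)%N in hlt *; move=> hk; split; lia.
have hlt : (a' %/ B < a %/ B)%N by rewrite ltn_neqAle eq_sym hne leq_div2r.
rewrite ltn_divLR // in hlt.
have := leq_trunc_div a B.
have hM : (a %/ B < M)%N by rewrite ltn_divLR.
set k := (a %/ B * B)%N in hlt *; move=> hk; split; lia.
Qed.

Theorem lemmaA2 (R : realType) (L : nat) (hL : (2 <= L)%N) :
  exists C : R, forall (S : nat -> set (R * R)), admissible_seq R L S ->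
    forall n i j : nat, (1 <= i <= n)%N -> (1 <= j <= n)%N ->
      (#|pair_set R L n i j S|%:R : R)
        <= C * (L%:R ^+ (2 * n + j) / L%:R ^+ (2 * i)).
Proof.
exists 16%:R => S adm n i j /andP[hi1 hin] /andP[hj1 hjn].
have hL0 : (0 < L)%N by apply: leq_trans hL.
have [gn Hgn] := @col_struct R L S hL0 adm n n (leqnn n).
have [gj Hgj] := @col_struct R L S hL0 adm j n hjn.
rewrite subnn expn0 in Hgn.
set N := (L ^ n)%N in Hgn *.
set B := (L ^ (n - j))%N in Hgj.
set D := (L ^ (n - i))%N.
have hB : (0 < B)%N by rewrite expn_gt0 hL0.
have hD : (0 < D)%N by rewrite expn_gt0 hL0.
have hLj : (0 < L ^ j)%N by rewrite expn_gt0 hL0.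
have hLi : (0 < L ^ i)%N by rewrite expn_gt0 hL0.
have hNB : N = (L ^ j * B)%N by rewrite /N /B -expnD subnKC.
have hND : N = (L ^ i * D)%N by rewrite /N /D -expnD subnKC.
have hN0 : (0 < N)%N by rewrite expn_gt0 hL0.
have exc : forall a a' : nat, xcor R L n a - xcor R L n a' = (a%:R - a'%:R) / N%:R.
  by move=> a a'; rewrite /xcor mulrBl.
have hx : forall a a' : nat,
    `|xcor R L n a - xcor R L n a'| <= ((L ^ i)%:R)^-1 -> (a' <= a + D)%N.
  move=> a a'; rewrite exc normrM normfV (ger0_norm (ler0n _ _)).
  rewrite ler_pdivrMr ?ltr0n // hND natrM mulKf ?pnatr_eq0 -?lt0n //.
  rewrite ler_norml => /andP [h1 h2].
  by rewrite -(ler_nat R) natrD; lra.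
have hy : forall b b' : nat, (b < b' + B)%N -> (b' < b + B)%N ->
    `|xcor R L n b - xcor R L n b'| < ((L ^ j)%:R)^-1.
  move=> b b' h1 h2; rewrite exc normrM normfV (ger0_norm (ler0n _ _)).
  rewrite ltr_pdivrMr ?ltr0n // hNB natrM mulKf ?pnatr_eq0 -?lt0n //.
  rewrite -(ltr_nat R) natrD in h1; rewrite -(ltr_nat R) natrD in h2.
  rewrite ltr_norml; apply/andP; split; lra.
set P := pair_set R L n i j S.
have key : forall QQ, QQ \in P ->
  [/\ (QQ.2.1 <= QQ.1.1 + D)%N, (QQ.1.1 <= QQ.2.1 + D)%N,
      (QQ.1.1 %/ B != QQ.2.1 %/ B)%N,
      (QQ.1.2 : nat) = gn QQ.1.1 & (QQ.2.2 : nat) = gn QQ.2.1].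
  move=> QQ; rewrite inE => /asboolP [h1 [h2 [h3 h4]]].
  have e1 := Hgn _ _ h1; have e2 := Hgn _ _ h2.
  rewrite !divn1 in e1 e2.
  split => //.
  - exact: hx h3.
  - by apply: hx; rewrite distrC.
  - apply/eqP => E.
    have E2 : (QQ.1.2 %/ B = QQ.2.2 %/ B)%N by rewrite (Hgj _ _ h1) (Hgj _ _ h2) E.
    have d1 := divn_eq QQ.1.2 B; have d2 := divn_eq QQ.2.2 B.
    have m1 := ltn_pmod QQ.1.2 hB; have m2 := ltn_pmod QQ.2.2 hB.
    rewrite E2 in d1.
    set q := (QQ.2.2 %/ B * B)%N in d1 d2.
    have := hy QQ.1.2 QQ.2.2 ltac:(lia) ltac:(lia).
    by rewrite ltNge h4.
pose psi (QQ : Didx L n * Didx L n) : bool * 'I_(L ^ j).+1 * 'I_D.+1 * 'I_D.+1 :=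
  let e := enc B QQ.1.1 QQ.2.1 in (e.1.1.1, inord e.1.1.2, inord e.1.2, inord e.2).
have inj : {in P &, injective psi}.
  move=> x y hx' hy' Exy.
  have [x1 x2 x3 x4 x5] := key x hx'.
  have [y1 y2 y3 y4 y5] := key y hy'.
  have bx : (x.1.1 < L ^ j * B)%N by rewrite -hNB ltn_ord.
  have bx' : (x.2.1 < L ^ j * B)%N by rewrite -hNB ltn_ord.
  have by1 : (y.1.1 < L ^ j * B)%N by rewrite -hNB ltn_ord.
  have by' : (y.2.1 < L ^ j * B)%N by rewrite -hNB ltn_ord.
  have [ex1 ex2 ex3] := @enc_bounds B D (L ^ j)%N _ _ hB x3 x1 x2 bx bx'.
  have [ey1 ey2 ey3] := @enc_bounds B D (L ^ j)%N _ _ hB y3 y1 y2 by1 by'.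
  have := congr1 (fun t : bool * 'I_(L ^ j).+1 * 'I_D.+1 * 'I_D.+1 =>
     (t.1.1.1, (t.1.1.2 : nat), (t.1.2 : nat), (t.2 : nat))) Exy.
  rewrite /psi /= !inordK ?ltnS //.
  move=> Ee.
  have Ed : dec B (enc B x.1.1 x.2.1) = dec B (enc B y.1.1 y.2.1).
    by move: Ee; case: (enc B x.1.1 x.2.1) => [[[? ?] ?] ?];
       case: (enc B y.1.1 y.2.1) => [[[? ?] ?] ?] /= [-> -> -> ->].
  rewrite !enc_dec // in Ed; case: Ed => Ea Ea'.
  clear -x4 x5 y4 y5 Ea Ea'.
  move: x y x4 x5 y4 y5 Ea Ea' => [[a b] [a' b']] [[c d] [c' d']] /=.
  move=> e1 e2 e3 e4 Ea Ea'.
  have h1 : a = c by apply: val_inj.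
  have h2 : a' = c' by apply: val_inj.
  subst c c'.
  have h3 : b = d by apply: val_inj; rewrite /= e1 e3.
  have h4 : b' = d' by apply: val_inj; rewrite /= e2 e4.
  by subst.
have hcard : (#|P| <= 2 * (L ^ j).+1 * D.+1 * D.+1)%N.
  rewrite -(card_in_imset inj).
  apply: leq_trans (max_card _) _.
  by rewrite !card_prod card_bool !card_ord.
have hc2 : (#|P| <= 16 * (L ^ j * D * D))%N by apply: leq_trans hcard _; nia.
have -> : (16%:R : R) * (L%:R ^+ (2 * n + j) / L%:R ^+ (2 * i)) =
          (16 * (L ^ j * D * D))%N%:R.
  rewrite -!natrX.
  have -> : (L ^ (2 * n + j) = (L ^ j * D * D) * L ^ (2 * i))%N.
    rewrite /D -!expnD; congr (expn L _); move: hin; clear; lia.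
  have h0 : ((L ^ (2 * i))%:R : R) != 0 by rewrite pnatr_eq0 -lt0n expn_gt0 hL0.
  rewrite (natrM R (L ^ j * D * D)%N (L ^ (2 * i))%N) mulfK //.
  by rewrite (natrM R 16 (L ^ j * D * D)%N).
by rewrite ler_nat.
Qed.
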